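(* Let $f:\{0,1\}^3\to\{0,1\}$ be $f(x_1,x_2,x_3)=(x_1\wedge x_2)\vee(\bar x_1\wedge\bar x_2\wedge x_3)$, where $\bar y$ denotes the negation of the bit $y$. Then $Q_E(f)=2$, while every parity decision tree computing $f$ has depth at least $3$.
   Context: Quantum query model: a $t$-query quantum query algorithm on inputs $x\in\{0,1\}^m$ acts on a Hilbert space $\mathcal H_{\rm in}\otimes\mathcal H_{\rm work}\otimes\mathcal H_{\rm out}$, where $\mathcal H_{\rm in}$ has orthonormal basis $|0\rangle,\dots,|m\rangle$, $\mathcal H_{\rm work}$ is a finite-dimensional workspace of arbitrary size, and $\mathcal H_{\rm out}$ is one qubit. It is specified by input-independent unitaries $U_0,\dots,U_t$, and on input $x$ produces the state $U_tO_xU_{t-1}O_x\cdots O_xU_0|0\rangle$ ($t$ applications of $O_x$), where the oracle $O_x$ acts on $\mathcal H_{\rm in}$ by $|i\rangle\mapsto(-1)^{x_i}|i\rangle$ with the convention $x_0=0$ (and as the identity on the other registers). The output is obtained by measuring $\mathcal H_{\rm out}$ in the computational basis. The algorithm computes $h$ exactly if for every $x$ the output equals $h(x)$ with probability $1$. $Q_E(h)$ is the minimum $t$ such that some $t$-query quantum query algorithm computes $h$ exactly. A parity decision tree is a rooted binary tree in which every internal vertex has exactly two children and each internal vertex $v$ is labelled by a subset $S_v$ of input positions, and each leaf is labelled $0$ or $1$. On input $x$, evaluation starts at the root; at internal vertex $v$ the parity $\bigoplus_{i\in S_v}x_i$ is computed, and the left subtree is evaluated if it is $0$ and the right subtree if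 it is $1$; the output is the label of the leaf reached. Its depth is the maximum length of a root-to-leaf path. *)

(* Defs.v *)
From HB Require Import structures.
From mathcomp Require Import all_boot all_order all_algebra all_field.
Set Implicit Arguments. Unset Strict Implicit. Unset Printing Implicit Defensive.
Import Order.TTheory GRing.Theory Num.Theory.
Local Open Scope ring_scope.

Section Quantum.
Variable C : numClosedFieldType.

(* Basis of H_in (x) H_work (x) H_out: input register |0>..|m>, workspace
   of dimension w.+1 (any positive finite dimension), one output qubit. *)
Definition basisT (m w : nat) := ('I_m.+1 * 'I_w.+1 * bool)%type.
Definition qdim (m w : nat) := #|{: basisT m w}|.

(* x_i with the convention x_0 = 0; input position i in 1..m is x (i-1). *)
Definition xext (m : nat) (x : {ffun 'I_m -> bool}) (i : 'I_m.+1) : bool :=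
  match unlift ord0 i with None => false | Some j => x j end.

Definition adjoint (n : nat) (U : 'M[C]_n) : 'M[C]_n := (map_mx Num.conj U)^T.
Definition unitary (n : nat) (U : 'M[C]_n) : Prop := U *m adjoint U = 1%:M.

Definition init_state (m w : nat) : 'cV[C]_(qdim m w) :=
  \col_k (enum_val k == (ord0, ord0, false))%:R.

Definition oracle (m w : nat) (x : {ffun 'I_m -> bool}) : 'M[C]_(qdim m w) :=
  \matrix_(j, k) ((j == k)%:R *
     (if xext x (enum_val k).1.1 then -1 else 1)).

Fixpoint qstate (m w : nat) (Us : nat -> 'M[C]_(qdim m w))
    (x : {ffun 'I_m -> bool}) (k : nat) : 'cV[C]_(qdim m w) :=
  match k with
  | 0 => Us 0%N *m init_state m w
  | k'.+1 => Us k *m (oracle w x *m qstate Us x k')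
  end.

Definition prob_out (m w : nat) (psi : 'cV[C]_(qdim m w)) (b : bool) : C :=
  \sum_(k | (enum_val k).2 == b) `|psi k 0| ^+ 2.

Definition exact_alg (m : nat) (h : {ffun 'I_m -> bool} -> bool) (t : nat) : Prop :=
  exists (w : nat) (Us : nat -> 'M[C]_(qdim m w)),
    (forall k, (k <= t)%N -> unitary (Us k)) /\
    forall x, prob_out (qstate Us x t) (h x) = 1.

Definition QE_eq (m : nat) (h : {ffun 'I_m -> bool} -> bool) (q : nat) : Prop :=
  exact_alg h q /\ forall t, exact_alg h t -> (q <= t)%N.

End Quantum.

Inductive pdt (m : nat) : Type :=
| PLeaf of bool
| PNode of {set 'I_m} & pdt m & pdt m.

Fixpoint pdt_eval (m : nat) (T : pdt m) (x : {ffun 'I_m -> bool}) : bool :=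
  match T with
  | PLeaf b => b
  | PNode A l r =>
      if \big[addb/false]_(i in A) x i then pdt_eval r x else pdt_eval l x
  end.

Fixpoint pdt_depth (m : nat) (T : pdt m) : nat :=
  match T with
  | PLeaf _ => 0%N
  | PNode _ l r => (maxn (pdt_depth l) (pdt_depth r)).+1
  end.

Definition f3 (x : {ffun 'I_3 -> bool}) : bool :=
  let x1 := x (@Ordinal 3 0 isT) in
  let x2 := x (@Ordinal 3 1 isT) in
  let x3 := x (@Ordinal 3 2 isT) in
  (x1 && x2) || (~~ x1 && ~~ x2 && x3).

(* Main.v *)
Require Import Defs.
From HB Require Import structures.
From mathcomp Require Import all_boot all_order all_algebra all_field.
From mathcomp Require Import ssrZ zify ring.
From Stdlib Require Import BinInt.
Set Implicit Arguments. Unset Strict Implicit. Unset Printing Implicit Defensive.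
Import Order.TTheory GRing.Theory Num.Theory.

Definition b3 := (bool * bool * bool)%type.
Definition p_xb_of (x : {ffun 'I_3 -> bool}) : b3 :=
  (x (@Ordinal 3 0 isT), x (@Ordinal 3 1 isT), x (@Ordinal 3 2 isT)).
Definition abits (A : {set 'I_3}) : b3 :=
  (@Ordinal 3 0 isT \in A, @Ordinal 3 1 isT \in A, @Ordinal 3 2 isT \in A).
Definition par3 (a xb : b3) : bool :=
  (a.1.1 && xb.1.1) (+) ((a.1.2 && xb.1.2) (+) ((a.2 && xb.2) (+) false)).
Lemma parityE (A : {set 'I_3}) (x : {ffun 'I_3 -> bool}) : \big[addb/false]_(i in A) x i = par3 (abits A) (p_xb_of x).
Proof.
rewrite big_mkcond !big_ord_recl big_ord0 /par3 /abits /p_xb_of /=.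
have e0 : (ord0 : 'I_3) = @Ordinal 3 0 isT by apply: val_inj.
have e1 : (lift ord0 ord0 : 'I_3) = @Ordinal 3 1 isT by apply: val_inj.
have e2 : (lift ord0 (lift ord0 ord0) : 'I_3) = @Ordinal 3 2 isT by apply: val_inj.
rewrite e2 e1 e0.
by do 3 case: (_ \in A).
Qed.
Definition p_f3b (xb : b3) := (xb.1.1 && xb.1.2) || (~~ xb.1.1 && ~~ xb.1.2 && xb.2).
Definition sub1 := (b3 * bool * bool)%type.
Definition ev1 (s : sub1) (xb : b3) := if par3 s.1.1 xb then s.2 else s.1.2.
Definition gen (p : b3 * sub1 * sub1) (xb : b3) :=
  if par3 p.1.1 xb then ev1 p.2 xb else ev1 p.1.2 xb.
Definition p_bools := [:: true; false].
Definition allb3 (P : b3 -> bool) := all (fun a => all (fun b => all (fun c => P (a, b, c)) p_bools) p_bools) p_bools.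
Definition alls1 (P : sub1 -> bool) := allb3 (fun a => all (fun c => all (fun d => P (a, c, d)) p_bools) p_bools).
Definition brute := allb3 (fun a => alls1 (fun s => alls1 (fun s' =>
   ~~ allb3 (fun xb => gen (a, s, s') xb == p_f3b xb)))).
Lemma bruteT : brute = true. Proof. vm_compute. reflexivity. Qed.
Lemma allb3P P : allb3 P = true -> forall xb, P xb = true.
Proof.
move=> /allP h [[a b] c].
have ha : a \in p_bools by case: a.
have hb' : b \in p_bools by case: b.
have hc' : c \in p_bools by case: c.
have /allP hb := h a ha.
have /allP hc := hb b hb'.
exact: hc c hc'.
Qed.
Lemma alls1P P : alls1 P = true -> forall s, P s = true.
Proof.
move=> /allb3P h [[a c] d]; have /allP hc := h a.
have hc' : c \in p_bools by case: c.
have hd' : d \in p_bools by case: d.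
have /allP hd := hc c hc'.
exact: hd d hd'.
Qed.

Lemma sub1_of (S : pdt 3) : (pdt_depth S <= 1)%nat -> exists s : sub1, forall x, pdt_eval S x = ev1 s (p_xb_of x).
Proof.
case: S => [b|B l r] /=.
  by move=> _; exists ((false, false, false), b, b) => x; rewrite /ev1 /=; case: par3.
rewrite ltnS leqn0 => /eqP h.
have hl : (pdt_depth l = 0)%nat by apply/eqP; rewrite -leqn0; move: (leq_maxl (pdt_depth l) (pdt_depth r)); rewrite h.
have hr : (pdt_depth r = 0)%nat by apply/eqP; rewrite -leqn0; move: (leq_maxr (pdt_depth l) (pdt_depth r)); rewrite h.
clear h; case: l hl => [c|? ? ?] //= _; case: r hr => [d|? ? ?] //= _.
by exists (abits B, c, d) => x; rewrite /ev1 parityE.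
Qed.

Lemma gen_of (T : pdt 3) : (pdt_depth T <= 2)%nat -> exists p, forall x, pdt_eval T x = gen p (p_xb_of x).
Proof.
case: T => [b|A l r] /=.
  by move=> _; exists ((false, false, false), ((false, false, false), b, b), ((false, false, false), b, b)) => x;
    rewrite /gen /ev1 /=.
rewrite ltnS geq_max => /andP[hl hr].
have [s1 h1] := sub1_of hl; have [s2 h2] := sub1_of hr.
by exists (abits A, s1, s2) => x; rewrite /gen parityE h1 h2.
Qed.

Definition p_mkx (xb : b3) : {ffun 'I_3 -> bool} := [ffun i : 'I_3 => nth false [:: xb.1.1; xb.1.2; xb.2] i].
Lemma p_xb_of_mkx xb : p_xb_of (p_mkx xb) = xb.
Proof. by case: xb => [[a b] c]; rewrite /p_xb_of /p_mkx !ffunE. Qed.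
Lemma p_f3_mkx xb : f3 (p_mkx xb) = p_f3b xb.
Proof. by case: xb => [[a b] c]; rewrite /f3 /p_f3b /p_mkx !ffunE. Qed.

Lemma allb3I (P : b3 -> bool) : (forall xb, P xb) -> allb3 P.
Proof. by move=> H; apply/allP => a _; apply/allP => b _; apply/allP => c _; apply: H. Qed.

Lemma pdt_lower (T : pdt 3) : (forall x, pdt_eval T x = f3 x) -> (3 <= pdt_depth T)%nat.
Proof.
move=> H; rewrite leqNgt; apply/negP => hd.
have [p Hp] := gen_of hd.
have := bruteT; rewrite /brute => /allb3P /(_ p.1.1) /alls1P /(_ p.1.2) /alls1P /(_ p.2).
case: p Hp => [[a s] s'] Hp /= /negP; apply; apply: allb3I => xb /=.
by have := Hp (p_mkx xb); rewrite H p_xb_of_mkx p_f3_mkx => ->.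
Qed.

Local Open Scope ring_scope.

Section LB.
Variable C : numClosedFieldType.
Variable w : nat.
Local Notation n := (qdim 3 w).

Definition nrm (v : 'cV[C]_n) := \sum_k `|v k 0| ^+ 2.

Lemma conjN1 : (-1 : C)^* = -1.
Proof. by rewrite rmorphN rmorph1. Qed.

Lemma nrm_unitary (U : 'M[C]_n) v : unitary U -> nrm (U *m v) = nrm v.
Proof.
rewrite /unitary => /mulmx1C hU.
rewrite /nrm; under eq_bigr do rewrite normCK mxE.
under eq_bigr do rewrite rmorph_sum mulr_suml.
under eq_bigr do under eq_bigr do rewrite mulr_sumr.
rewrite exchange_big /=; under eq_bigr do rewrite exchange_big /=.
transitivity (\sum_j \sum_l (v j 0 * (v l 0)^*) * (adjoint U *m U) l j).
  apply: eq_bigr => j _; apply: eq_bigr => l _; rewrite mxE mulr_sumr.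
  apply: eq_bigr => k _; rewrite !mxE rmorphM; ring.
rewrite hU; apply: eq_bigr => j _.
rewrite (bigD1 j) //= big1 ?addr0; first by rewrite mxE eqxx mulr1 normCK.
by move=> l /negbTE lj; rewrite mxE lj mulr0.
Qed.

Definition sx (x : {ffun 'I_3 -> bool}) (j : 'I_n) : C :=
  if xext x (enum_val j).1.1 then -1 else 1.

Lemma oracle_apply x (v : 'cV[C]_n) j : (oracle C w x *m v) j 0 = sx x j * v j 0.
Proof.
rewrite mxE (bigD1 j) //= big1 ?addr0; first by rewrite mxE eqxx mul1r.
by move=> k; rewrite eq_sym => /negbTE jk; rewrite mxE jk !mul0r.
Qed.

Lemma nrm_oracle x v : nrm (oracle C w x *m v) = nrm v.
Proof.
apply: eq_bigr => j _; rewrite oracle_apply normrM /sx.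
by case: xext; rewrite ?normrN normr1 mul1r.
Qed.

Lemma nrm_init : nrm (init_state C 3 w) = 1.
Proof.
rewrite /nrm (bigD1 (enum_rank (ord0, ord0, false))) //= big1 ?addr0.
  by rewrite mxE enum_rankK eqxx normr1 expr1n.
move=> k hk; rewrite mxE.
have -> : (enum_val k == (ord0, ord0, false)) = false.
  apply/negbTE; apply: contra hk => /eqP <-; by rewrite enum_valK.
by rewrite normr0 expr0n.
Qed.

Lemma prob_sum (psi : 'cV[C]_n) : prob_out psi true + prob_out psi false = nrm psi.
Proof.
rewrite /nrm (bigID (fun k => (enum_val k).2 == true)) /=; congr (_ + _).
by apply: eq_bigl => k; case: (enum_val k).2.
Qed.

Lemma nrm_qstate (Us : nat -> 'M[C]_n) x t :
  (forall k, (k <= t)%nat -> unitary (Us k)) -> nrm (qstate Us x t) = 1.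
Proof.
elim: t => [|t IH] hU /=.
  by rewrite nrm_unitary ?nrm_init //; apply: hU.
rewrite nrm_unitary ?nrm_oracle ?IH //; last exact: hU.
by move=> k hk; apply: hU; apply: leqW.
Qed.
Local Notation X := {ffun 'I_3 -> bool}.
Definition o0 := @Ordinal 3 0 isT.
Definition o1 := @Ordinal 3 1 isT.
Definition o2 := @Ordinal 3 2 isT.
Definition sgn (x : X) : C := (-1) ^+ (x o0 + x o1 + x o2)%nat.
Definition flip (m : 'I_3) (x : X) : X := [ffun i => if i == m then ~~ x i else x i].
Lemma flipK m : involutive (flip m).
Proof. by move=> x; apply/ffunP => i; rewrite !ffunE; case: (i == m) => //; rewrite negbK. Qed.

Lemma ord3 (i : 'I_3) : i = o0 \/ i = o1 \/ i = o2.
Proof.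
case: i => [[|[|[|k]]] Hk] //.
- by left; apply: val_inj.
- by right; left; apply: val_inj.
- by right; right; apply: val_inj.
Qed.

Lemma sgn_flip m x : sgn (flip m x) = - sgn x.
Proof.
rewrite /sgn /flip !ffunE.
have sgnS (k : nat) : (-1 : C) ^+ k.+1 = - (-1) ^+ k by rewrite exprS mulN1r.
case: (ord3 m) => [->|[->|->]] /=;
  case: (x o0); case: (x o1); case: (x o2); rewrite /= ?add0n ?addn0 ?sgnS ?opprK //;
  by rewrite ?expr0 ?expr1 ?sgnS ?opprK ?expr0.
Qed.

Definition alt (F : X -> C) := \sum_x sgn x * F x.

Lemma alt_flip m F : (forall x, F (flip m x) = F x) -> alt F = 0.
Proof.
move=> hF; have h : alt F = - alt F.
  rewrite {1}/alt (reindex_inj (can_inj (flipK m))) /= /alt -sumrN.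
  by apply: eq_bigr => x _; rewrite hF sgn_flip mulNr.
have : 2%:R * alt F = 0 by rewrite mulr_natl mulr2n {1}h addNr.
by move/eqP; rewrite mulf_eq0 pnatr_eq0 => /eqP.
Qed.

Lemma alt_ext F G : (forall x, F x = G x) -> alt F = alt G.
Proof. by move=> h; apply: eq_bigr => x _; rewrite h. Qed.

Lemma alt_sum (I : finType) (Q : pred I) (G : I -> X -> C) :
  alt (fun x => \sum_(i | Q i) G i x) = \sum_(i | Q i) alt (G i).
Proof.
rewrite /alt; under eq_bigr do rewrite mulr_sumr.
by rewrite exchange_big.
Qed.

Lemma alt_scale c F : alt (fun x => c * F x) = c * alt F.
Proof. by rewrite /alt mulr_sumr; apply: eq_bigr => x _; rewrite mulrCA. Qed.
Lemma xext_flip (i : 'I_4) (m : 'I_3) x : (i : nat) != m.+1 -> xext (flip m x) i = xext x i.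
Proof.
rewrite /xext; case: unliftP => [j ->|->] //= hne.
rewrite ffunE; case: eqP => [ejm|//]; exfalso; move: hne; by rewrite ejm /bump leq0n add1n eqxx.
Qed.

Lemma avoid2 (i1 i2 : 'I_4) : exists m : 'I_3, ((i1 : nat) != m.+1) && ((i2 : nat) != m.+1).
Proof.
case: i1 i2 => [[|[|[|[|k]]]] H1] // [[|[|[|[|k']]]] H2] //;
  by [exists o0 | exists o1 | exists o2].
Qed.

Lemma alt_sx j l : alt (fun x => sx x j * sx x l) = 0.
Proof.
have [m /andP[h1 h2]] := avoid2 (enum_val j).1.1 (enum_val l).1.1.
by apply: (alt_flip (m := m)) => x; rewrite /sx !xext_flip.
Qed.

Lemma conj_sx x j : (sx x j)^* = sx x j.
Proof. by rewrite /sx; case: xext; rewrite ?conjN1 ?rmorph1. Qed.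

Lemma prob_expand (U : 'M[C]_n) (phi : 'cV[C]_n) x :
  prob_out (U *m (oracle C w x *m phi)) true =
  \sum_(k | (enum_val k).2 == true) \sum_j \sum_l
     ((U k j * phi j 0) * ((U k l)^* * (phi l 0)^*)) * (sx x j * sx x l).
Proof.
apply: eq_bigr => k _; rewrite normCK mxE rmorph_sum mulr_suml.
apply: eq_bigr => j _; rewrite mulr_sumr; apply: eq_bigr => l _.
rewrite !oracle_apply !rmorphM.
have -> : Num.Num_conj__canonical__GRing_RMorphism C (sx x l) = sx x l by exact: conj_sx.
rewrite /=; ring.
Qed.
Definition l_mkx (xb : bool * bool * bool) : X := [ffun i : 'I_3 => nth false [:: xb.1.1; xb.1.2; xb.2] i].
Definition l_xb_of (x : X) : bool * bool * bool := (x o0, x o1, x o2).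
Lemma l_mkxK : cancel l_mkx l_xb_of.
Proof. by case=> [[a b] c]; rewrite /l_xb_of /l_mkx !ffunE. Qed.
Lemma l_xb_ofK : cancel l_xb_of l_mkx.
Proof. by move=> x; apply/ffunP => i; rewrite ffunE; case: (ord3 i) => [->|[->|->]]. Qed.

Lemma sumX (G : X -> C) : \sum_x G x = \sum_(a : bool) \sum_(b : bool) \sum_(c : bool) G (l_mkx (a, b, c)).
Proof.
rewrite (reindex l_mkx) /=; last by exists l_xb_of => ? _; [apply: l_mkxK | apply: l_xb_ofK].
rewrite pair_bigA pair_bigA /=; apply: eq_bigr => -[[a b] c] _ //.
Qed.

Lemma alt_f3 : alt (fun x => (f3 x)%:R) = -1.
Proof.
rewrite /alt sumX !big_bool /= /sgn /f3 /l_mkx !ffunE /=.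
ring.
Qed.
End LB.

Lemma lower (C : numClosedFieldType) (t : nat) : exact_alg C f3 t -> (2 <= t)%nat.
Proof.
case=> w [Us [hU hex]].
rewrite leqNgt; apply/negP => ht.
have P_eq : forall x, prob_out (qstate Us x t) true = (f3 x)%:R.
  move=> x; have := prob_sum (qstate Us x t); rewrite nrm_qstate //.
  have := hex x; case: (f3 x) => -> //.
  by move=> h; apply: (addIr 1); rewrite h add0r.
have A1 : alt (fun x => prob_out (qstate Us x t) true) = -1.
  by rewrite (alt_ext P_eq) alt_f3.
have A0 : alt (fun x => prob_out (qstate Us x t) true) = 0.
  case: t ht hU hex P_eq A1 => [|[|t]] // _ _ _ _ _.
    by apply: (alt_flip (m := o0)) => x.
  rewrite (@alt_ext C _ (fun x => \sum_(k | (enum_val k).2 == true) \sum_j \sum_l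
     ((Us 1%nat k j * (Us 0%nat *m init_state C 3 w) j 0) * ((Us 1%nat k l)^* * ((Us 0%nat *m init_state C 3 w) l 0)^*)) * (@sx C w x j * @sx C w x l))); last first.
    by move=> x; exact: prob_expand.
  rewrite alt_sum big1 // => k _; rewrite alt_sum big1 // => j _.
  rewrite alt_sum big1 // => l _; by rewrite alt_scale alt_sx mulr0.
by move: A1; rewrite A0 => /eqP; rewrite eq_sym oppr_eq0 oner_eq0.
Qed.

Close Scope ring_scope.
Open Scope Z_scope.
Definition v0 : seq Z := [:: 7; 0; -3; 0; 0; 0; 0; 0; 0; 0; -5; 0; 0; 0; 0; 0; 0; 0; 0; 0; -5; 0; 0; 0; 0; 0; 0; 0; 0; 0; -4; 0; -4; 0; 0; 0; 0; 0; 0; 0]%Z.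
Definition v1 : seq Z := [:: 8; 0; 14; 0; 5; 0; 5; 0; 0; 0; -5; 0; 0; 0; 0; 0; 0; 0; 0; 0; -5; 0; 0; 0; 0; 0; 0; 0; 0; 0; -6; 0; 0; 0; 0; 0; 0; 0; 0; 0]%Z.
Definition v2 : seq Z := [:: -680; 0; 592; 0; -128; 0; -128; 0; 0; 0; 1448; 0; -99; 0; -297; 0; -231; 0; -33; 0; 788; 0; 1683; 0; 297; 0; 231; 0; 33; 0; -1470; 0; -198; 0; -396; 0; 0; 0; 0; 0]%Z.
Definition v3 : seq Z := [:: -3400; 0; 2960; 0; -640; 0; -640; 0; 0; 0; 100; 0; 18783; 0; 4941; 0; 3843; 0; 549; 0; 11080; 0; -10863; 0; -4941; 0; -3843; 0; -549; 0; -7350; 0; -990; 0; -1980; 0; 0; 0; 0; 0]%Z.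
Definition v4 : seq Z := [:: -8140; 0; 12512; 0; 1568; 0; 1568; 0; 0; 0; 15127; 0; -4212; 0; 0; 0; 0; 0; 0; 0; 15127; 0; -4212; 0; 0; 0; 0; 0; 0; 0; -10815; 0; 18621; 0; 2106; 0; 0; 0; 0; 0]%Z.
Definition v5 : seq Z := [:: 12; -40; 0; 0; 0; 0; 0; 0; 0; 0; 15; 0; -20; 0; 0; 0; 0; 0; 0; 0; 15; 0; -20; 0; 0; 0; 0; 0; 0; 0; -9; 0; -5; 0; -10; 0; 0; 0; 0; 0]%Z.
Definition v6 : seq Z := [:: -92; 0; -80; -120; -80; -120; -80; -120; 0; 0; -35; 0; -60; 0; 0; 0; 0; 0; 0; 0; -35; 0; -60; 0; 0; 0; 0; 0; 0; 0; 69; 0; -15; 0; -30; 0; 0; 0; 0; 0]%Z.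
Definition sumZ (n : nat) (f : nat -> Z) : Z := foldr (fun k acc => Z.add (f k) acc) 0 (iota 0 n).
Definition nthZ (v : seq Z) k := nth 0 v k.
Definition mget (M : seq (seq Z)) i j := nth 0 (nth [::] M i) j.
Definition dotZ u v := sumZ 40 (fun k => Z.mul (nthZ u k) (nthZ v k)).
Definition mkM (f : nat -> nat -> Z) := mkseq (fun i => mkseq (fun j => f i j) 40) 40.
Definition reflM (v : seq Z) := let d := dotZ v v in
  mkM (fun i j => Z.sub (if (i == j)%nat then d else 0) (Z.mul 2 (Z.mul (nthZ v i) (nthZ v j)))).
Definition mulMM A B := mkM (fun i j => sumZ 40 (fun k => Z.mul (mget A i k) (mget B k j))).
Definition trM M := mkM (fun i j => mget M j i).
Definition scalM s := mkM (fun i j => if (i == j)%nat then s else 0).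
Definition mulMV M u := mkseq (fun i => sumZ 40 (fun k => Z.mul (mget M i k) (nthZ u k))) 40.
Definition sgnbit (xb : bool * bool * bool) (i : nat) :=
  nth false [:: false; xb.1.1; xb.1.2; xb.2] i.
Definition oracleV xb u := mkseq (fun k => if sgnbit xb (k %/ 10) then Z.opp (nthZ u k) else nthZ u k) 40.
Definition e0 := mkseq (fun k => if (k == 0%nat) then 1 else 0) 40.
Definition f3b (xb : bool * bool * bool) :=
  (xb.1.1 && xb.1.2) || (~~ xb.1.1 && ~~ xb.1.2 && xb.2).
Definition sumsq (u : seq Z) (b : bool) := sumZ 40 (fun k => if odd k == b then Z.mul (nthZ u k) (nthZ u k) else 0).
Definition uchk M d := mulMM M (trM M) == scalM (Z.mul d d).
Definition R0 := reflM v0. Definition R1 := reflM v1. Definition R2 := reflM v2.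
Definition R3 := reflM v3. Definition R4 := reflM v4. Definition R5 := reflM v5. Definition R6 := reflM v6.
Definition D0 := dotZ v0 v0. Definition D1 := dotZ v1 v1. Definition D2 := dotZ v2 v2.
Definition D3 := dotZ v3 v3. Definition D4 := dotZ v4 v4. Definition D5 := dotZ v5 v5. Definition D6 := dotZ v6 v6.
Definition finV xb := mulMV R6 (mulMV R5 (oracleV xb (mulMV R4 (mulMV R3 (mulMV R2 (mulMV R1
   (oracleV xb (mulMV R0 e0)))))))).
Definition Dtot := Z.mul D6 (Z.mul D5 (Z.mul D4 (Z.mul D3 (Z.mul D2 (Z.mul D1 (Z.mul D0 1)))))).
Definition check3 (p : bool * bool * bool) := sumsq (finV p) (f3b p) == Z.mul Dtot Dtot.
Lemma check3T p : check3 p = true.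
Proof. by case: p => [[[] []] []]; vm_compute. Qed.
Lemma uchk0 : uchk R0 D0 = true. Proof. vm_compute. reflexivity. Qed.
Lemma Dnz0 : Z.mul D0 D0 != 0. Proof. vm_compute. reflexivity. Qed.
Lemma uchk1 : uchk R1 D1 = true. Proof. vm_compute. reflexivity. Qed.
Lemma Dnz1 : Z.mul D1 D1 != 0. Proof. vm_compute. reflexivity. Qed.
Lemma uchk2 : uchk R2 D2 = true. Proof. vm_compute. reflexivity. Qed.
Lemma Dnz2 : Z.mul D2 D2 != 0. Proof. vm_compute. reflexivity. Qed.
Lemma uchk3 : uchk R3 D3 = true. Proof. vm_compute. reflexivity. Qed.
Lemma Dnz3 : Z.mul D3 D3 != 0. Proof. vm_compute. reflexivity. Qed.
Lemma uchk4 : uchk R4 D4 = true. Proof. vm_compute. reflexivity. Qed.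
Lemma Dnz4 : Z.mul D4 D4 != 0. Proof. vm_compute. reflexivity. Qed.
Lemma uchk5 : uchk R5 D5 = true. Proof. vm_compute. reflexivity. Qed.
Lemma Dnz5 : Z.mul D5 D5 != 0. Proof. vm_compute. reflexivity. Qed.
Lemma uchk6 : uchk R6 D6 = true. Proof. vm_compute. reflexivity. Qed.
Lemma Dnz6 : Z.mul D6 D6 != 0. Proof. vm_compute. reflexivity. Qed.
Lemma Dtotnz : Z.mul Dtot Dtot != 0. Proof. vm_compute. reflexivity. Qed.

Close Scope Z_scope.
Open Scope ring_scope.

Section UB.
Variable C : numClosedFieldType.
Local Notation T := (basisT 3 4).
Definition zC (z : Z) : C := (int_of_Z z)%:~R.
Lemma zCD a b : zC (Z.add a b) = zC a + zC b.
Proof. by rewrite /zC (raddfD int_of_Z a b) intrD. Qed.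
Lemma zCM a b : zC (Z.mul a b) = zC a * zC b.
Proof. by rewrite /zC (rmorphM int_of_Z a b) intrM. Qed.
Lemma zCN a : zC (Z.opp a) = - zC a.
Proof. by rewrite /zC (raddfN int_of_Z a) mulrNz. Qed.
Lemma zC0 : zC 0%Z = 0. Proof. by []. Qed.
Lemma zC_real z : zC z \is Num.real.
Proof. exact: realz. Qed.
Lemma zC_neq0 z : z != 0%Z -> zC z != 0.
Proof.
move=> nz; rewrite /zC intr_eq0; apply: contra nz => /eqP h.
by rewrite -(int_of_ZK z) h.
Qed.
Lemma zC_foldr (f : nat -> Z) s :
  zC (foldr (fun k acc => Z.add (f k) acc) 0%Z s) = \sum_(k <- s) zC (f k).
Proof. by elim: s => [|a s IH]; rewrite ?big_nil ?big_cons //= zCD IH. Qed.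
Lemma zC_sum n f : zC (sumZ n f) = \sum_(k < n) zC (f k).
Proof.
rewrite /sumZ zC_foldr.
have -> : iota 0 n = index_iota 0 n by rewrite /index_iota subn0.
exact: (big_mkord xpredT (fun k => zC (f k))).
Qed.
Definition code (t : T) : nat := ((t.1.1 * 5 + t.1.2) * 2 + t.2)%nat.
Lemma code_lt t : (code t < 40)%nat.
Proof. case: t => [[i j] b]; have := ltn_ord i; have := ltn_ord j; rewrite /code /=; case: b => /=; lia. Qed.
Definition decode (k : 'I_40) : T := ((inord (k %/ 10), inord ((k %% 10) %/ 2)), odd k).
Lemma code_decode k : code (decode k) = k.
Proof.
case: k => k Hk; rewrite /code /decode /= !inordK; lia.
Qed.
Lemma decode_code t : decode (Ordinal (code_lt t)) = t.
Proof.
case: t => [[i j] b]; have := ltn_ord i; have := ltn_ord j.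
rewrite /decode /code /=; move=> hj hi.
congr (_, _, _); try (apply: val_inj; rewrite /= inordK; case: b; lia).
by case: b => /=; rewrite ?addn0 ?addn1 /= ?oddS oddM andbF.
Qed.
Lemma code_inj : injective code.
Proof.
move=> t t' h; rewrite -(decode_code t) -(decode_code t'); congr decode.
exact: val_inj.
Qed.
Lemma sumT (F : nat -> C) : \sum_(t : T) F (code t) = \sum_(k < 40) F k.
Proof.
rewrite (reindex decode) /=; first by apply: eq_bigr => k _; rewrite code_decode.
exists (fun t => Ordinal (code_lt t)) => [k _|t _]; first by apply: val_inj; rewrite /= code_decode.
by apply: code_inj; rewrite code_decode.
Qed.
Lemma sumE (G : T -> C) : \sum_(k < qdim 3 4) G (enum_val k) = \sum_(t : T) G t.
Proof. by rewrite /qdim -big_enum_val. Qed.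
Definition MatZ (M : seq (seq Z)) (d : Z) : 'M[C]_(qdim 3 4) :=
  \matrix_(j, k) (zC (mget M (code (enum_val j)) (code (enum_val k))) / zC d).
Definition ColZ (u : seq Z) (d : Z) : 'M[C]_(qdim 3 4, 1) :=
  \col_j (zC (nthZ u (code (enum_val j))) / zC d).

Lemma MatZ_ColZ M a u b : MatZ M a *m ColZ u b = ColZ (mulMV M u) (Z.mul a b).
Proof.
apply/colP => j; rewrite !mxE.
under eq_bigr do rewrite !mxE.
rewrite (sumE (fun t => zC (mget M (code (enum_val j)) (code t)) / zC a * (zC (nthZ u (code t)) / zC b))).
rewrite (sumT (fun k => zC (mget M (code (enum_val j)) k) / zC a * (zC (nthZ u k) / zC b))).
rewrite /mulMV /nthZ nth_mkseq ?code_lt // zC_sum zCM invfM mulr_suml.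
by apply: eq_bigr => k _; rewrite zCM mulrACA.
Qed.

Lemma MatZ_mul A a B b : MatZ A a *m MatZ B b = MatZ (mulMM A B) (Z.mul a b).
Proof.
apply/matrixP => i j; rewrite !mxE.
under eq_bigr do rewrite !mxE.
rewrite (sumE (fun t => zC (mget A (code (enum_val i)) (code t)) / zC a * (zC (mget B (code t) (code (enum_val j))) / zC b))).
rewrite (sumT (fun k => zC (mget A (code (enum_val i)) k) / zC a * (zC (mget B k (code (enum_val j))) / zC b))).
rewrite /mulMM /mkM /mget nth_mkseq ?code_lt // nth_mkseq ?code_lt // zC_sum zCM invfM mulr_suml.
by apply: eq_bigr => k _; rewrite zCM mulrACA.
Qed.

Lemma conj_zC z : (zC z)^* = zC z.
Proof. exact: conj_Creal (zC_real z). Qed.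

Lemma conj_zC' z : Num.Num_conj__canonical__GRing_RMorphism C (zC z) = zC z.
Proof. exact: conj_zC. Qed.

Lemma adjoint_MatZ M d : adjoint (MatZ M d) = MatZ (trM M) d.
Proof.
apply/matrixP => i j; rewrite !mxE rmorphM fmorphV !conj_zC'.
by rewrite /trM /mkM /mget nth_mkseq ?code_lt // nth_mkseq ?code_lt.
Qed.

Lemma codeE_eq (i j : 'I_(qdim 3 4)) : (code (enum_val i) == code (enum_val j)) = (i == j).
Proof.
apply/eqP/eqP => [h|->//]; exact/enum_val_inj/code_inj.
Qed.

Lemma MatZ_scal d : zC d != 0 -> MatZ (scalM d) d = 1%:M.
Proof.
move=> nz; apply/matrixP => i j; rewrite !mxE /scalM /mkM /mget nth_mkseq ?code_lt // nth_mkseq ?code_lt //.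
rewrite codeE_eq; case: (i == j) => /=; first by rewrite divff.
by rewrite zC0 mul0r.
Qed.

Lemma unitary_MatZ M d : uchk M d = true -> zC (Z.mul d d) != 0 -> unitary (MatZ M d).
Proof.
rewrite /uchk /unitary adjoint_MatZ MatZ_mul => /eqP -> nz.
exact: MatZ_scal.
Qed.

Lemma unitary_mul n (A B : 'M[C]_n) : unitary A -> unitary B -> unitary (A *m B).
Proof.
rewrite /unitary /adjoint => hA hB.
rewrite map_mxM trmx_mul mulmxA -(mulmxA A) hB mulmx1 //.
Qed.
Definition xb_of (x : {ffun 'I_3 -> bool}) : bool * bool * bool :=
  (x (@Ordinal 3 0 isT), x (@Ordinal 3 1 isT), x (@Ordinal 3 2 isT)).

Lemma code_div t : (code t %/ 10)%nat = t.1.1.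
Proof. case: t => [[i j] b]; have := ltn_ord j; rewrite /code /=; case: b; lia. Qed.

Lemma xext_sgn x (i : 'I_4) : xext x i = sgnbit (xb_of x) i.
Proof.
rewrite /xext; case: unliftP => [j ->|->] //=.
case: j => [[|[|[|k]]] Hk] //=; congr (x _); exact: val_inj.
Qed.

Lemma oracle_ColZ x u b : oracle C 4 x *m ColZ u b = ColZ (oracleV (xb_of x) u) b.
Proof.
apply/colP => j; rewrite !mxE (bigD1 j) //= big1 ?addr0.
  rewrite !mxE eqxx mul1r /oracleV /nthZ nth_mkseq ?code_lt // code_div -xext_sgn.
  by case: xext; rewrite ?zCN ?mulN1r ?mulNr ?mul1r.
by move=> k; rewrite eq_sym => /negbTE jk; rewrite !mxE jk mul0r mul0r.
Qed.

Lemma init_ColZ : init_state C 3 4 = ColZ e0 1%Z.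
Proof.
apply/colP => j; rewrite !mxE /e0 /nthZ nth_mkseq ?code_lt // divr1.
have -> : (enum_val j == (ord0, ord0, false)) = (code (enum_val j) == 0%nat).
  apply/eqP/eqP => [->//|h]; apply: code_inj; rewrite h.
  by [].
by case: (_ == _).
Qed.

Lemma prob_ColZ u d b : zC (Z.mul d d) != 0 -> sumsq u b = Z.mul d d -> prob_out (ColZ u d) b = 1.
Proof.
move=> nz hs; rewrite /prob_out big_mkcond /=.
under eq_bigr do rewrite mxE.
rewrite (sumE (fun t => if t.2 == b then `|zC (nthZ u (code t)) / zC d| ^+ 2 else 0)).
have oc : forall t : T, t.2 = odd (code t).
  by case=> [[i j] []]; rewrite /code /= ?addn0 ?addn1 ?oddS oddM andbF.
under eq_bigr => t _ do rewrite oc.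
rewrite (sumT (fun k => if odd k == b then `|zC (nthZ u k) / zC d| ^+ 2 else 0)).
have : zC (sumsq u b) = zC (Z.mul d d) by rewrite hs.
rewrite /sumsq zC_sum => h.
rewrite -(divff nz) -{1}h mulr_suml; apply: eq_bigr => k _.
case: (_ == _); last by rewrite mul0r.
rewrite real_normK ?rpredM ?rpredV ?zC_real // !zCM expr2 invfM.
by rewrite mulrACA.
Qed.
Definition U0 := MatZ R0 D0.
Definition U1 := MatZ R4 D4 *m MatZ R3 D3 *m MatZ R2 D2 *m MatZ R1 D1.
Definition U2 := MatZ R6 D6 *m MatZ R5 D5.
Definition Ualg (k : nat) : 'M[C]_(qdim 3 4) :=
  match k with 0 => U0 | 1 => U1 | _ => U2 end.

Lemma Ualg_unitary k : unitary (Ualg k).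
Proof.
have U := fun M d (hu : uchk M d = true) (hn : Z.mul d d != 0%Z) => unitary_MatZ hu (zC_neq0 hn).
case: k => [|[|k]] /=.
- exact: U (uchk0) Dnz0.
- by repeat apply: unitary_mul; apply: U; [exact: uchk4|exact: Dnz4|exact: uchk3|exact: Dnz3|exact: uchk2|exact: Dnz2|exact: uchk1|exact: Dnz1].
- by apply: unitary_mul; apply: U; [exact: uchk6|exact: Dnz6|exact: uchk5|exact: Dnz5].
Qed.

Lemma U1_apply (v : 'M[C]_(qdim 3 4, 1)) : U1 *m v = MatZ R4 D4 *m (MatZ R3 D3 *m (MatZ R2 D2 *m (MatZ R1 D1 *m v))).
Proof. by rewrite /U1 !mulmxA. Qed.
Lemma U2_apply (v : 'M[C]_(qdim 3 4, 1)) : U2 *m v = MatZ R6 D6 *m (MatZ R5 D5 *m v).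
Proof. by rewrite /U2 !mulmxA. Qed.

Lemma U0_apply (v : 'M[C]_(qdim 3 4, 1)) : U0 *m v = MatZ R0 D0 *m v.
Proof. by []. Qed.
Opaque R0 R1 R2 R3 R4 R5 R6 D0 D1 D2 D3 D4 D5 D6 MatZ ColZ U2 U1 U0 oracle mulMV oracleV.
Lemma qstate_alg x : qstate Ualg x 2 = ColZ (finV (xb_of x)) Dtot.
Proof.
have -> : qstate Ualg x 2 = U2 *m (oracle C 4 x *m (U1 *m (oracle C 4 x *m (U0 *m init_state C 3 4)))) by [].
rewrite /finV /Dtot U2_apply.
rewrite -MatZ_ColZ; congr (_ *m _).
rewrite -MatZ_ColZ; congr (_ *m _).
rewrite -oracle_ColZ; congr (_ *m _).
rewrite U1_apply.
rewrite -MatZ_ColZ; congr (_ *m _).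
rewrite -MatZ_ColZ; congr (_ *m _).
rewrite -MatZ_ColZ; congr (_ *m _).
rewrite -MatZ_ColZ; congr (_ *m _).
rewrite -oracle_ColZ; congr (_ *m _).
rewrite U0_apply -MatZ_ColZ; congr (_ *m _).
by rewrite init_ColZ.
Qed.

Lemma upper : exact_alg C f3 2.
Proof.
exists 4%nat, Ualg; split; first by move=> k _; apply: Ualg_unitary.
move=> x; rewrite qstate_alg.
apply: prob_ColZ; first exact: zC_neq0 Dtotnz.
by have := check3T (xb_of x); rewrite /check3 => /eqP <-.
Qed.
End UB.

Close Scope ring_scope.
Delimit Scope nat_scope with N.

Theorem mainTheorem7 :
  (forall C : numClosedFieldType, QE_eq C f3 2) /\
  (forall T : pdt 3, (forall x, pdt_eval T x = f3 x) -> (3 <= pdt_depth T)%N).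
Proof.
split; first by move=> C; split; [exact: upper | exact: lower].
exact: pdt_lower.
Qed.
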